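(* Let $A\in\mathbb{R}^{m\times n}$, $y\in\mathbb{R}^m$, $\lambda>0$, and let $x^\star$ be a global minimizer of $$\min_{x\in\mathbb{R}^n}\ \frac{1}{2\lambda}\|Ax-y\|^2+\sum_{i=1}^{N} w_i\|x_{G_i}\|.$$ Let $\beta^\star=-\frac{1}{\lambda}A^\top(Ax^\star-y)$. Then for every $t\in\{1,\dots,N\}$: if $\|\beta^\star_{G_t}\|<w_t$, then $x^\star_{G_t}=0$.
   Context: Let $n,N\in\mathbb{N}$ and let $G_1,\dots,G_N\subseteq\{1,\dots,n\}$ be nonempty index sets (groups), possibly overlapping, with $\bigcup_{i=1}^N G_i=\{1,\dots,n\}$, and let $w_1,\dots,w_N>0$ be weights. For $x\in\mathbb{R}^n$ and $G\subseteq\{1,\dots,n\}$, $x_G\in\mathbb{R}^{|G|}$ denotes the subvector of $x$ with entries indexed by $G$ (in increasing index order). All norms are Euclidean. The vector $\beta^\star$ is called the LASSO certificate. *)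

(* Defs.v *)
From HB Require Import structures.
From mathcomp Require Import all_boot all_order all_algebra.
From mathcomp Require Import reals.
Set Implicit Arguments. Unset Strict Implicit. Unset Printing Implicit Defensive.
Import Order.TTheory GRing.Theory Num.Theory.
Local Open Scope ring_scope.

Definition eucl_norm (R : realType) (k : nat) (v : 'cV[R]_k) : R :=
  Num.sqrt (\sum_(i < k) v i 0 ^+ 2).

Definition group_norm (R : realType) (k : nat) (v : 'cV[R]_k) (G : {set 'I_k}) : R :=
  Num.sqrt (\sum_(i in G) v i 0 ^+ 2).

Definition glasso_obj (R : realType) (m n N : nat) (A : 'M[R]_(m, n)) (y : 'cV[R]_m)
  (lam : R) (G : 'I_N -> {set 'I_n}) (w : 'I_N -> R) (x : 'cV[R]_n) : R :=
  (2 * lam)^-1 * eucl_norm (A *m x - y) ^+ 2 + \sum_(i < N) w i * group_norm x (G i).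

(* Main.v *)
Require Import Defs.
From HB Require Import structures.
From mathcomp Require Import all_boot all_order all_algebra.
From mathcomp Require Import reals ring lra.
Set Implicit Arguments. Unset Strict Implicit. Unset Printing Implicit Defensive.
Import Order.TTheory GRing.Theory Num.Theory.
Local Open Scope ring_scope.

Definition ip (R : realType) k (u v : 'cV[R]_k) := \sum_i u i 0 * v i 0.

Lemma eu_sq (R : realType) k (v : 'cV[R]_k) : eucl_norm v ^+ 2 = ip v v.
Proof.
rewrite /eucl_norm sqr_sqrtr; last by apply: sumr_ge0 => i _; apply: sqr_ge0.
by apply: eq_bigr => i _; rewrite expr2.
Qed.

Lemma ip_expand (R : realType) k (u v : 'cV[R]_k) s :
  ip (u - s *: v) (u - s *: v) = ip u u - 2 * s * ip u v + s ^+ 2 * ip v v.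
Proof.
rewrite /ip.
rewrite (eq_bigr (fun i => u i 0 * u i 0 - 2 * s * (u i 0 * v i 0) + s ^+ 2 * (v i 0 * v i 0))); last first.
  move=> i _; rewrite !mxE; move: (u i 0) (v i 0) => a b. ring.
by rewrite !big_split /= sumrN -!mulr_sumr.
Qed.

Lemma ip_mul (R : realType) m k (A : 'M[R]_(m, k)) (D : 'cV[R]_k) (r : 'cV[R]_m) :
  ip (A *m D) r = ip D (A^T *m r).
Proof.
rewrite /ip.
under eq_bigr do rewrite mxE big_distrl.
rewrite exchange_big; apply: eq_bigr => j _ /=; rewrite mxE big_distrr.
by apply: eq_bigr => i _; rewrite !mxE /= mulrCA mulrA.
Qed.

Lemma ip_ge0 (R : realType) k (u : 'cV[R]_k) : 0 <= ip u u.
Proof. by apply: sumr_ge0 => i _; rewrite -expr2 sqr_ge0. Qed.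

Lemma ip_sym (R : realType) k (u v : 'cV[R]_k) : ip u v = ip v u.
Proof. by apply: eq_bigr => i _; rewrite mulrC. Qed.

Lemma ip_NZ (R : realType) k (u v : 'cV[R]_k) c : ip u (- (c *: v)) = - (c * ip u v).
Proof. rewrite /ip mulr_sumr -sumrN; apply: eq_bigr => i _; rewrite !mxE; ring. Qed.

Lemma sq_expand (R : realType) k (G : {set 'I_k}) (u v : 'cV[R]_k) (a b : R) :
  \sum_(j in G) (a * u j 0 - b * v j 0) ^+ 2 =
  a ^+ 2 * \sum_(j in G) u j 0 ^+ 2 - 2 * a * b * \sum_(j in G) u j 0 * v j 0
  + b ^+ 2 * \sum_(j in G) v j 0 ^+ 2.
Proof.
rewrite (eq_bigr (fun j => a ^+ 2 * u j 0 ^+ 2 - 2 * a * b * (u j 0 * v j 0) + b ^+ 2 * v j 0 ^+ 2)); last first.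
  by move=> j _; ring.
by rewrite !big_split /= sumrN -!mulr_sumr.
Qed.

Unset Implicit Arguments.

Theorem proposition3p5 (R : realType) (m n N : nat)
  (G : 'I_N -> {set 'I_n}) (w : 'I_N -> R)
  (hGne : forall i, G i != set0)
  (hGcov : \bigcup_(i < N) G i = [set: 'I_n])
  (hw : forall i, 0 < w i)
  (A : 'M[R]_(m, n)) (y : 'cV[R]_m) (lam : R) (hlam : 0 < lam)
  (xs : 'cV[R]_n)
  (hmin : forall x : 'cV[R]_n, glasso_obj A y lam G w xs <= glasso_obj A y lam G w x) :
  let beta := - (lam^-1 *: (A^T *m (A *m xs - y))) in
  forall t : 'I_N, group_norm beta (G t) < w t ->
    forall j, j \in G t -> xs j 0 = 0.
Proof.
move=> beta t hlt.
set r := A *m xs - y.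
pose D : 'cV[R]_n := \col_j (if j \in G t then xs j 0 else 0).
set a2 := \sum_(j in G t) xs j 0 ^+ 2.
set b2 := \sum_(j in G t) beta j 0 ^+ 2.
set p := \sum_(j in G t) xs j 0 * beta j 0.
have a2ge0 : 0 <= a2 by apply: sumr_ge0 => j _; apply: sqr_ge0.
have b2ge0 : 0 <= b2 by apply: sumr_ge0 => j _; apply: sqr_ge0.
set a := Num.sqrt a2.
have a2E : a2 = a ^+ 2 by rewrite sqr_sqrtr.
have age0 : 0 <= a by apply: sqrtr_ge0.
have hb2 : b2 < w t ^+ 2.
  have := hlt; rewrite /group_norm -/b2 => h.
  rewrite -(sqr_sqrtr b2ge0); rewrite ltr_pXn2r //; first by rewrite nnegrE sqrtr_ge0.
  by rewrite nnegrE ltW.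
have hpD : ip D beta = p.
  rewrite /ip /p [RHS]big_mkcond; apply: eq_bigr => j _; rewrite mxE.
  by case: ifP => _ //; rewrite mul0r.
set Q := ip (A *m D) (A *m D).
have Qge0 : 0 <= Q by apply: ip_ge0.
set c0 := (2 * lam)^-1.
have c0ge0 : 0 < c0 by rewrite invr_gt0 mulr_gt0.
have F1 : forall s, 0 < s <= 1 -> 0 <= s * p + s ^+ 2 * c0 * Q - s * w t * a.
  move=> s /andP[s0 s1].
  have := hmin (xs - s *: D); rewrite /glasso_obj !eu_sq.
  have -> : A *m (xs - s *: D) - y = r - s *: (A *m D).
    by rewrite mulmxBr scalemxAr addrAC.
  rewrite ip_expand (ip_sym r) ip_mul.
  have hAr : ip D (A^T *m r) = - lam * p.
    move: hpD; rewrite /beta ip_NZ => <-.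
    by rewrite -/r mulNr mulrN opprK mulrA mulfV ?gt_eqF // mul1r.
  rewrite -/r hAr -/c0 -/Q.
  have -> : c0 * (ip r r - 2 * s * (- lam * p) + s ^+ 2 * Q) = c0 * ip r r + s * p + s ^+ 2 * c0 * Q.
    by rewrite /c0; field; rewrite gt_eqF.
  have hpen : \sum_(i < N) w i * group_norm (xs - s *: D) (G i) <=
      \sum_(i < N) w i * group_norm xs (G i) - s * w t * a.
    rewrite (bigD1 t) //= [X in _ <= X - _](bigD1 t) //=.
    have ht : group_norm (xs - s *: D) (G t) = (1 - s) * a.
      rewrite /group_norm (eq_bigr (fun j => (1 - s) ^+ 2 * xs j 0 ^+ 2)); last first.
        by move=> j hj; rewrite !mxE hj; ring.
      by rewrite -mulr_sumr sqrtrM ?sqr_ge0 // sqrtr_sqr ger0_norm // subr_ge0.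
    have ho : \sum_(i < N | i != t) w i * group_norm (xs - s *: D) (G i) <=
              \sum_(i < N | i != t) w i * group_norm xs (G i).
      apply: ler_sum => i _; apply: ler_wpM2l; first exact: ltW.
      rewrite /group_norm ler_sqrt; last first.
        by apply: sumr_ge0 => j _; apply: sqr_ge0.
      apply: ler_sum => j _; rewrite !mxE; case: ifP => _; last by rewrite mulr0 subr0.
      move: (xs j 0) => x; nra.
    rewrite ht.
    have -> : group_norm xs (G t) = a by [].
    move: ho; nra.
  move: hpen; nra.
have F2 : 0 < a -> w t * a <= p.
  move=> apos; rewrite leNgt; apply/negP => hq.
  set q := w t * a - p.
  have qpos : 0 < q by rewrite subr_gt0.
  set K := c0 * Q.
  have Kge0 : 0 <= K by rewrite mulr_ge0 // ltW.
  have qK : 0 < q + K by rewrite ltr_wpDr.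
  set s := q / (q + K).
  have spos : 0 < s by rewrite divr_gt0.
  have sK : s * (q + K) = q by rewrite /s mulfVK // gt_eqF.
  have sle1 : s <= 1.
    by rewrite /s ler_pdivrMr // mul1r lerDl.
  have := F1 s; rewrite spos sle1 => /(_ isT) h.
  have h2 : 0 <= s * (p + s * K - w t * a).
    by move: h; rewrite /K; congr (_ <= _); ring.
  rewrite pmulr_rge0 // in h2.
  have : s * K < q by rewrite -sK ltr_pM2l // ltrDr.
  move: h2; rewrite /q; lra.
have CS : 0 <= w t ^+ 2 * a2 - 2 * w t * a * p + a ^+ 2 * b2.
  by rewrite -sq_expand; apply: sumr_ge0 => j _; apply: sqr_ge0.
have a0 : a = 0.
  apply/eqP; rewrite eq_le age0 andbT leNgt; apply/negP => apos.
  have hp := F2 apos.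
  have wpos := hw t.
  rewrite a2E in CS.
  have a2pos : 0 < a ^+ 2 by rewrite exprn_gt0.
  have : a ^+ 2 * b2 < a ^+ 2 * w t ^+ 2 by rewrite ltr_pM2l.
  have : 2 * w t * a * (w t * a) <= 2 * w t * a * p.
    by rewrite ler_pM2l // !mulr_gt0.
  move: CS; nra.
have a20 : a2 = 0 by rewrite a2E a0 expr0n.
move=> j hj.
have := (@psumr_eq0P _ _ _ _ (fun i _ => sqr_ge0 (xs i 0)) a20 j hj).
by move/eqP; rewrite sqrf_eq0 => /eqP.
Qed.
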